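(* Let $M$ be a loopless matroid on a finite nonempty ground set $E$ with density $\rho=|E|/\operatorname{rank}(E)$. The following are equivalent: (1) the base polytope $P(M)$ contains the point $(\rho^{-1},\dots,\rho^{-1})$ in its relative interior; (2) $\rho(A)\le\rho(E)$ for all nonempty $A\subseteq E$, with strict inequality whenever $A$ is not a union of ground sets of connected components of $M$; (3) there exists a measure $\mu$ on the bases with $\mu(B)>0$ for every basis $B$ such that $\mu(\{B: B\ni e\})$ is the same for all $e\in E$.
   Context: $\operatorname{rank}(A)=\max_B|A\cap B|$ over bases $B$; $\rho(A)=|A|/\operatorname{rank}(A)$. $P(M)$ is the convex hull of the $0$–$1$ indicator vectors of bases. The direct sum of matroids on disjoint ground sets has as bases the unions of one basis from each. A matroid is connected if it is not a direct sum of two matroids on nonempty ground sets; every matroid decomposes uniquely as $M=\bigoplus_{i=1}^\ell M_i$ with each $M_i$ connected on $E_i$, $E=E_1\sqcup\dots\sqcup E_\ell$; these $M_i$ are the connected components. A matroid satisfying these conditions is called strictly uniformly dense. *)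

(* Defs.v *)
(* Matroids on a finite ground set T (the whole finType),
   given by their set of bases. *)
From HB Require Import structures.
From mathcomp Require Import all_boot all_order all_algebra.
From mathcomp Require Import reals.
Set Implicit Arguments. Unset Strict Implicit. Unset Printing Implicit Defensive.
Import Order.TTheory GRing.Theory Num.Theory.
Local Open Scope ring_scope.

Section Matroid.
Variable T : finType.
Variable bases : {set {set T}}.

Definition is_matroid : Prop :=
  bases != set0 /\
  forall B1 B2, B1 \in bases -> B2 \in bases -> forall x, x \in B1 :\: B2 ->
    exists2 y, y \in B2 :\: B1 & (y |: (B1 :\ x)) \in bases.

Definition loopless : Prop := forall e : T, exists2 B, B \in bases & e \in B.

Definition indep (I : {set T}) : bool := [exists B in bases, I \subset B].

Definition rank (A : {set T}) : nat := \max_(B in bases) #|A :&: B|.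

Definition density (R : realType) (A : {set T}) : R := #|A|%:R / (rank A)%:R.

Definition restr_basis (S X : {set T}) : bool :=
  [&& X \subset S, indep X &
      [forall Y : {set T}, (X \proper Y) && (Y \subset S) ==> ~~ indep Y]].

(* M|S is the direct sum M|S1 ⊕ M|(S\S1) *)
Definition restr_splits (S S1 : {set T}) : Prop :=
  forall X : {set T}, X \subset S ->
    (restr_basis S X = restr_basis S1 (X :&: S1) && restr_basis (S :\: S1) (X :&: (S :\: S1))).

Definition restr_connected (S : {set T}) : Prop :=
  forall S1 : {set T}, S1 \subset S -> S1 != set0 -> S :\: S1 != set0 -> ~ restr_splits S S1.

Definition component_decomposition (P : {set {set T}}) : Prop :=
  [/\ partition P [set: T],
      (forall X : {set T}, X \in bases = [forall S in P, restr_basis S (X :&: S)])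
    & forall S : {set T}, S \in P -> restr_connected S].

Definition union_of_components (A : {set T}) : Prop :=
  exists P : {set {set T}}, component_decomposition P /\ exists2 Q : {set {set T}}, Q \subset P & A = cover Q.

Section Polytope.
Variable R : realType.

Definition indicator (B : {set T}) (e : T) : R := (e \in B)%:R.

Definition in_base_polytope (x : T -> R) : Prop :=
  exists lam : {set T} -> R,
    [/\ forall B : {set T}, B \in bases -> 0 <= lam B,
        \sum_(B in bases) lam B = 1
      & forall e, x e = \sum_(B in bases) lam B * indicator B e].

Definition in_affine_hull (x : T -> R) : Prop :=
  exists lam : {set T} -> R,
    \sum_(B in bases) lam B = 1 /\
    forall e, x e = \sum_(B in bases) lam B * indicator B e.

(* relative interior: x in P(M) and some neighbourhood of x inside the affine
   hull (sup-norm ball; all norms on R^E are equivalent) lies in P(M) *)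
Definition in_rel_interior (x : T -> R) : Prop :=
  in_base_polytope x /\
  exists2 eps : R, 0 < eps &
    forall y, in_affine_hull y -> (forall e, `|y e - x e| < eps) -> in_base_polytope y.

Definition uniform_positive_measure : Prop :=
  exists mu : {set T} -> R,
    (forall B : {set T}, B \in bases -> 0 < mu B) /\
    forall e f : T, \sum_(B in bases | e \in B) mu B = \sum_(B in bases | f \in B) mu B.
End Polytope.
End Matroid.

(* Main.v *)
Require Import Defs.
From HB Require Import structures.
From mathcomp Require Import all_boot all_order all_algebra.
From mathcomp Require Import reals.
From Stdlib Require Import Classical.
From mathcomp Require Import ring lra zify.
Import Order.TTheory GRing.Theory Num.Theory.
Local Open Scope ring_scope.
Set Implicit Arguments. Unset Strict Implicit. Unset Printing Implicit Defensive.
Ltac bcase := repeat (match goal with |- context [?z \in ?A] => case: (z \in A) | |- context [?z == ?y] => case: (z == y) end); try done; intros;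
  repeat match goal with H : is_true true -> _ |- _ => specialize (H isT) end;
  try done; simpl in *; try discriminate; try done.

Lemma exists_minR (R : realType) (I : finType) (P : pred I) (f : I -> R) (i0 : I) :
  P i0 -> exists i, [/\ P i & forall j, P j -> f i <= f j].
Proof.
move=> Pi0; case: (@arg_minP _ _ I i0 P f Pi0) => i Pi H; exists i; split=> //.
Qed.
Lemma exists_maxR (R : realType) (I : finType) (P : pred I) (f : I -> R) (i0 : I) :
  P i0 -> exists i, [/\ P i & forall j, P j -> f j <= f i].
Proof.
move=> Pi0; case: (@arg_maxP _ _ I i0 P f Pi0) => i Pi H; exists i; split=> //.
Qed.

Section Mat.
Variable T : finType.
Variable bases : {set {set T}}.
Hypothesis hM : is_matroid bases.

Lemma exch B1 B2 x : B1 \in bases -> B2 \in bases -> x \in B1 :\: B2 ->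
  exists2 y, y \in B2 :\: B1 & (y |: (B1 :\ x)) \in bases.
Proof. by move=> h1 h2 hx; case: hM => _ H; exact: H h1 h2 x hx. Qed.

Lemma card_swap (A : {set T}) x y : x \in A -> y \notin A -> #|y |: (A :\ x)| = #|A|.
Proof.
move=> xA yA; rewrite cardsU1 inE negb_and yA orbT (cardsD1 x A) xA.
by rewrite add1n.
Qed.

Lemma bases_card B1 B2 : B1 \in bases -> B2 \in bases -> #|B1| = #|B2|.
Proof.
move=> hB1 hB2; move: {2}#|B1 :\: B2| (leqnn #|B1 :\: B2|) => k.
elim: k B1 hB1 => [|k IH] B1 hB1 hk.
- have sub: B1 \subset B2 by rewrite -setD_eq0 -cards_eq0 -leqn0.
  suff -> : B1 = B2 by [].
  apply/eqP; rewrite eqEsubset sub /=; apply/subsetP => x xB2.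
  apply/negPn/negP => xB1.
  have hx : x \in B2 :\: B1 by rewrite inE xB1 xB2.
  have [y] := exch hB2 hB1 hx.
  by rewrite inE => /andP[/negP yB2 /(subsetP sub)].
- case: (set_0Vmem (B1 :\: B2)) => [e0|[x hx]].
  + apply: (IH B1 hB1); by rewrite e0 cards0.
  + have [y hy hB'] := exch hB1 hB2 hx.
    move: hx hy; rewrite !inE => /andP[xB2 xB1] /andP[yB1 yB2].
    rewrite -(IH _ hB'); first by rewrite card_swap // yB1.
    have -> : (y |: (B1 :\ x)) :\: B2 = (B1 :\: B2) :\ x.
      apply/setP=> z; rewrite !inE; case: (z =P y) => [->|]; first by rewrite yB2 /= !andbF.
      by move=> _ /=; bcase.
    move: hk; rewrite (cardsD1 x (B1 :\: B2)) !inE xB2 xB1 /=.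
    by rewrite add1n ltnS.
Qed.

End Mat.

Section Sep.
Variable T : finType.
Variable bases : {set {set T}}.
Hypothesis hM : is_matroid bases.

Definition sep (A : {set T}) : Prop :=
  forall B1 B2, B1 \in bases -> B2 \in bases -> #|B1 :&: A| = #|B2 :&: A|.

Definition sepb (A : {set T}) : bool :=
  [forall B1 in bases, forall B2 in bases, #|B1 :&: A| == #|B2 :&: A|].

Lemma sepP A : reflect (sep A) (sepb A).
Proof.
apply: (iffP forall_inP) => [H B1 B2 h1 h2|H B1 h1].
  by have /forall_inP/(_ _ h2)/eqP := H _ h1.
by apply/forall_inP => B2 h2; rewrite (H _ _ h1 h2).
Qed.

Lemma bases_ne : exists B, B \in bases.
Proof. by case: hM => /set0Pn [B hB] _; exists B. Qed.

Lemma rank_ge A B : B \in bases -> (#|A :&: B| <= rank bases A)%N.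
Proof. by move=> hB; rewrite /rank; apply: (@leq_bigmax_cond _ (fun B => B \in bases) (fun B => #|A :&: B|) B). Qed.

Lemma rank_eq A : exists2 B, B \in bases & rank bases A = #|A :&: B|.
Proof.
have [B0 hB0] := bases_ne.
have hc : (0 < #|bases|)%N by apply/card_gt0P; exists B0.
by case: (eq_bigmax_cond (fun B => #|A :&: B|) hc) => B hB e; exists B.
Qed.

Lemma sep_rank A B : sep A -> B \in bases -> #|A :&: B| = rank bases A.
Proof.
move=> hs hB; have [B' hB' ->] := rank_eq A.
by rewrite setIC (hs B B' hB hB') setIC.
Qed.

Lemma rankT B : B \in bases -> rank bases [set: T] = #|B|.
Proof.
move=> hB; have hs : sep [set: T].
  by move=> B1 B2 h1 h2; rewrite !setIT; apply: (bases_card hM).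
by rewrite -(sep_rank hs hB) setTI.
Qed.

Lemma cardID (B A : {set T}) : #|B| = (#|B :&: A| + #|B :\: A|)%N.
Proof. by rewrite cardsID. Qed.

Lemma mixing A B1 B2 : sep A -> B1 \in bases -> B2 \in bases ->
  (B1 :&: A) :|: (B2 :\: A) \in bases.
Proof.
move=> hs hB1 hB2; move: {2}#|(B1 :\: A) :\: B2| (leqnn #|(B1 :\: A) :\: B2|) => k.
elim: k B1 hB1 => [|k IH] B1 hB1 hk.
- have sub: B1 :\: A \subset B2 by rewrite -setD_eq0 -cards_eq0 -leqn0.
  have sub2 : B1 :\: A \subset B2 :\: A.
    apply/subsetP => z hz; rewrite inE (subsetP sub _ hz).
    by move: hz; rewrite inE => /andP[->].
  have ce : #|B1 :\: A| = #|B2 :\: A|.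
    have := cardID B1 A; have := cardID B2 A.
    rewrite (bases_card hM hB1 hB2) (hs B1 B2 hB1 hB2) => ->.
    by move/eqP; rewrite eqn_add2l => /eqP.
  have /eqP e : B1 :\: A == B2 :\: A by rewrite eqEcard sub2 ce leqnn.
  by rewrite -e setID.
- case: (set_0Vmem ((B1 :\: A) :\: B2)) => [e0|[x hx]].
  + apply: (IH B1 hB1); by rewrite e0 cards0.
  + have hx' : x \in B1 :\: B2 by move: hx; rewrite !inE => /andP[-> /andP[_ ->]].
    have [y hy hB'] := exch hM hB1 hB2 hx'.
    move: hx hy; rewrite !inE => /andP[xB2 /andP[xA xB1]] /andP[yB1 yB2].
    have nyx : (y == x) = false by apply/eqP => e; move: yB1; rewrite e xB1.
    case yA: (y \in A).
    + have := hs _ _ hB' hB1.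
      have -> : (y |: (B1 :\ x)) :&: A = y |: (B1 :&: A).
        apply/setP=> z; rewrite !inE; case: (z =P y) => [->|_]; last case: (z =P x) => [->|_];
        rewrite ?yA ?(negbTE yB1) ?yB2 ?(negbTE xA) ?xB1 ?(negbTE xB2) ?eqxx ?nyx; bcase.
      by rewrite cardsU1 inE (negbTE yB1) /= add1n => /esym/n_Sn.
    + have -> : (B1 :&: A) = ((y |: (B1 :\ x)) :&: A).
        apply/setP=> z; rewrite !inE; case: (z =P y) => [->|_]; last case: (z =P x) => [->|_];
        rewrite ?yA ?(negbTE yB1) ?yB2 ?(negbTE xA) ?xB1 ?(negbTE xB2) ?eqxx ?nyx; bcase.
      apply: (IH _ hB').
      have -> : ((y |: (B1 :\ x)) :\: A) :\: B2 = ((B1 :\: A) :\: B2) :\ x.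
        apply/setP=> z; rewrite !inE; case: (z =P y) => [->|_]; last case: (z =P x) => [->|_];
        rewrite ?yA ?(negbTE yB1) ?yB2 ?(negbTE xA) ?xB1 ?(negbTE xB2) ?eqxx ?nyx; bcase.
      move: hk; rewrite (cardsD1 x ((B1 :\: A) :\: B2)) !inE xB2 xA xB1 /=.
      by rewrite add1n ltnS.
Qed.

End Sep.

Section Sep2.
Variable T : finType.
Variable bases : {set {set T}}.
Hypothesis hM : is_matroid bases.
Local Notation sep := (sep bases).

Lemma sepC A : sep A -> sep (~: A).
Proof.
move=> hs B1 B2 h1 h2.
have := cardID B1 A; have := cardID B2 A.
rewrite (bases_card hM h1 h2) (hs B1 B2 h1 h2) !setDE => -> /eqP.
by rewrite eqn_add2l => /eqP.
Qed.

Lemma sepI A A' : sep A -> sep A' -> sep (A :&: A').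
Proof.
move=> hA hA' B1 B2 h1 h2.
have hX := mixing hM hA h1 h2.
have hY := mixing hM hA' hX h2.
set X := (B1 :&: A) :|: (B2 :\: A) in hX hY.
set Y := (X :&: A') :|: (B2 :\: A') in hY.
have e1 : Y :&: (A :&: A') = B1 :&: (A :&: A').
  by apply/setP => z; rewrite /Y /X !inE; bcase.
have e2 : Y :\: (A :&: A') = B2 :\: (A :&: A').
  by apply/setP => z; rewrite /Y /X !inE; bcase.
have := cardID Y (A :&: A'); have := cardID B2 (A :&: A').
rewrite e1 e2 (bases_card hM hY h2) => -> /eqP.
by rewrite eqn_add2r => /eqP.
Qed.

Lemma sepU A A' : sep A -> sep A' -> sep (A :|: A').
Proof.
move=> hA hA'; rewrite -(setCK (A :|: A')) setCU.
by apply: sepC; apply: sepI; apply: sepC.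
Qed.

Lemma sepT : sep [set: T].
Proof. by move=> B1 B2 h1 h2; rewrite !setIT; apply: (bases_card hM). Qed.

Lemma sep0 : sep set0.
Proof. by move=> B1 B2 h1 h2; rewrite !setI0. Qed.

Lemma sep_restr S B : sep S -> B \in bases -> restr_basis bases S (B :&: S).
Proof.
move=> hs hB; apply/and3P; split; first exact: subsetIr.
  by apply/existsP; exists B; rewrite hB subsetIl.
apply/forallP => Y; apply/implyP => /andP[hpr hYS]; apply/negP => /existsP[B' /andP[hB' hYB']].
have c1 := proper_card hpr.
have c2 : (#|Y| <= #|B' :&: S|)%N by apply: subset_leq_card; rewrite subsetI hYB' hYS.
have := hs B B' hB hB'.
by move=> e; move: (leq_trans c1 c2); rewrite e ltnn.
Qed.

Lemma restr_sep S X : sep S -> restr_basis bases S X -> exists2 B, B \in bases & X = B :&: S.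
Proof.
move=> hs /and3P[hXS /existsP[B /andP[hB hXB]] hmax]; exists B => //.
apply/eqP; rewrite eqEproper subsetI hXS hXB /=.
apply/negP => hpr; move/forallP: hmax => /(_ (B :&: S)).
rewrite hpr subsetIr /= => /negP; apply.
by apply/existsP; exists B; rewrite hB subsetIl.
Qed.

Lemma restr_card S X : sep S -> restr_basis bases S X -> #|X| = rank bases S.
Proof.
by move=> hs /(restr_sep hs) [B hB ->]; rewrite setIC (sep_rank hM hs hB).
Qed.

End Sep2.

Section Comp.
Variable T : finType.
Variable bases : {set {set T}}.
Hypothesis hM : is_matroid bases.
Local Notation sep := (sep bases).

Definition Cc (e : T) : {set T} := \bigcap_(A | sepb bases A && (e \in A)) A.

Lemma Cc_in e : e \in Cc e.
Proof. by apply/bigcapP => A /andP[_ ->]. Qed.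

Lemma Cc_sep e : sep (Cc e).
Proof.
rewrite /Cc; apply: (big_ind sep); first exact: sepT.
  by move=> x y; apply: sepI.
by move=> A /andP[/sepP].
Qed.

Lemma Cc_sub A e : sep A -> e \in A -> Cc e \subset A.
Proof.
move=> hs he; rewrite /Cc.
by apply: bigcap_inf; rewrite he andbT; apply/sepP.
Qed.

Lemma Cc_subC A e : sep A -> e \notin A -> Cc e \subset ~: A.
Proof. by move=> hs he; apply: Cc_sub; [apply: sepC | rewrite inE]. Qed.

Lemma Cc_eq e f : f \in Cc e -> Cc f = Cc e.
Proof.
move=> hf; apply/eqP; rewrite eqEsubset (Cc_sub (Cc_sep e) hf) /=.
apply: Cc_sub; first exact: Cc_sep.
apply/negPn/negP => he; have := subsetP (Cc_subC (Cc_sep f) he) f hf.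
by rewrite inE Cc_in.
Qed.

Definition Pc : {set {set T}} := [set Cc e | e : T].

Lemma Pc_sep S : S \in Pc -> sep S.
Proof. by case/imsetP => e _ ->; apply: Cc_sep. Qed.

Lemma sep_cover A : sep A -> A = cover [set Cc e | e in A].
Proof.
move=> hs; apply/setP => z; apply/idP/bigcupP.
  by move=> hz; exists (Cc z); [apply/imsetP; exists z | exact: Cc_in].
case=> S /imsetP[e he ->] hz; exact: (subsetP (Cc_sub hs he)).
Qed.

Lemma Pc_partition : partition Pc [set: T].
Proof.
apply/and3P; split.
- apply/eqP/setP => z; rewrite inE; apply/bigcupP.
  by exists (Cc z); [apply/imsetP; exists z | exact: Cc_in].
- apply/trivIsetP => A B /imsetP[e _ ->] /imsetP[f _ ->] hne.
  rewrite -setI_eq0; apply/eqP/setP => g; rewrite !inE.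
  apply/negP => /andP[g1 g2]; move/negP: hne; apply.
  by rewrite -(Cc_eq g1) -(Cc_eq g2).
- apply/negP => /imsetP[e _ he]; by have := Cc_in e; rewrite -he inE.
Qed.

Lemma Pc_bases X : X \in bases = [forall S in Pc, restr_basis bases S (X :&: S)].
Proof.
apply/idP/forall_inP => [hX S hS| h].
  exact: sep_restr (Pc_sep hS) hX.
have key : forall s : seq {set T}, {subset s <= Pc} ->
  exists2 Y, Y \in bases & Y :&: \bigcup_(S <- s) S = X :&: \bigcup_(S <- s) S.
  elim=> [|S s IH] hs.
    have [B hB] := bases_ne hM; exists B => //; by rewrite big_nil !setI0.
  have hS : S \in Pc by apply: hs; rewrite inE eqxx.
  have hs' : {subset s <= Pc} by move=> x hx; apply: hs; rewrite inE hx orbT.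
  have [Y hY eY] := IH hs'.
  have [B hB eB] := restr_sep (Pc_sep hS) (h S hS).
  have hmix := mixing hM (Pc_sep hS) hB hY.
  exists ((B :&: S) :|: (Y :\: S)) => //.
  rewrite big_cons; move/setP: eY => eY; move/setP: eB => eB.
  apply/setP => z; have := eY z; have := eB z; rewrite !inE; bcase.
have hsub : {subset enum Pc <= Pc} by move=> x; rewrite mem_enum.
have [Y hY eY] := key (enum Pc) hsub.
have eC : \bigcup_(S <- enum Pc) S = [set: T].
  by rewrite big_enum /=; move/and3P: Pc_partition => [/eqP <- _ _].
by move: eY; rewrite eC !setIT => <-.
Qed.

Lemma Pc_connected S : S \in Pc -> restr_connected bases S.
Proof.
move=> hS S1 hS1S hS1 hSS1 hsp.
have sS := Pc_sep hS.
have sep1 : sep S1.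
  move=> B1 B2 h1 h2.
  have r1 := hsp _ (subsetIr B1 S); rewrite (sep_restr sS h1) in r1.
  have r2 := hsp _ (subsetIr B2 S); rewrite (sep_restr sS h2) in r2.
  have e1 : B2 :&: S :&: S1 = B2 :&: S1.
    apply/setP => z; have := subsetP hS1S z; rewrite !inE; bcase.
  have e2 : B1 :&: S :&: (S :\: S1) = B1 :&: (S :\: S1).
    apply/setP => z; have := subsetP hS1S z; rewrite !inE; bcase.
  rewrite e1 in r2; rewrite e2 in r1.
  move/esym/andP: r1 => [_ r1]; move/esym/andP: r2 => [r2 _].
  set X := (B2 :&: S1) :|: (B1 :&: (S :\: S1)).
  have hXS : X \subset S.
    apply/subsetP => z; have := subsetP hS1S z; rewrite !inE; bcase.
  have eX1 : X :&: S1 = B2 :&: S1.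
    apply/setP => z; have := subsetP hS1S z; rewrite !inE; bcase.
  have eX2 : X :&: (S :\: S1) = B1 :&: (S :\: S1).
    apply/setP => z; have := subsetP hS1S z; rewrite !inE; bcase.
  have rX : restr_basis bases S X by rewrite (hsp _ hXS) eX1 eX2 r1 r2.
  have cX := restr_card hM sS rX.
  have cB1 := sep_rank hM sS h1.
  have dX : #|X| = (#|B2 :&: S1| + #|B1 :&: (S :\: S1)|)%N.
    rewrite cardsU; suff -> : B2 :&: S1 :&: (B1 :&: (S :\: S1)) = set0 by rewrite cards0 subn0.
    by apply/setP => z; rewrite !inE; bcase.
  have dB : #|S :&: B1| = (#|B1 :&: S1| + #|B1 :&: (S :\: S1)|)%N.
    rewrite (cardID (S :&: B1) S1); congr (_ + _)%N; apply: eq_card => z;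
    have := subsetP hS1S z; rewrite !inE; bcase.
  move: cX; rewrite -cB1 dX dB => /eqP; rewrite eqn_add2r => /eqP.
  by move=> ->.
case/set0Pn: hS1 => f hf.
case/imsetP: hS => e _ eS.
have hfS : f \in Cc e by rewrite -eS (subsetP hS1S).
have := Cc_sub sep1 hf; rewrite (Cc_eq hfS) -eS => hSS1'.
move/negP: hSS1; apply; rewrite setD_eq0 //.
Qed.

Lemma Pc_decomp : component_decomposition bases Pc.
Proof.
split; [exact: Pc_partition | exact: Pc_bases | exact: Pc_connected].
Qed.

Lemma sep_union A : sep A -> union_of_components bases A.
Proof.
move=> hs; exists Pc; split; first exact: Pc_decomp.
exists [set Cc e | e in A]; last exact: sep_cover.
by apply/subsetP => S /imsetP[e _ ->]; apply/imsetP; exists e.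
Qed.

End Comp.

Section Union.
Variable T : finType.
Variable bases : {set {set T}}.
Hypothesis hM : is_matroid bases.
Local Notation sep := (sep bases).

Lemma union_sep A : union_of_components bases A -> sep A.
Proof.
case=> P [[hpart hb _] [Q hQ ->]].
have hsepP : forall S, S \in P -> sep S.
  move=> S hS B B' hB hB'.
  move/and3P: hpart => [_ htriv _].
  set X := (B' :&: S) :|: (B :\: S).
  have hX : X \in bases.
    rewrite hb; apply/forall_inP => S' hS'.
    have hb' := hB'; rewrite hb in hb'; move/forall_inP: hb' => hb'.
    have hbB := hB; rewrite hb in hbB; move/forall_inP: hbB => hbB.
    case: (S' =P S) => [->|ne].
      suff -> : X :&: S = B' :&: S by apply: hb'.
      by apply/setP => z; rewrite !inE; bcase.
    have dj : [disjoint S' & S] by move/trivIsetP: htriv; apply => //; apply/eqP.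
    suff -> : X :&: S' = B :&: S' by apply: hbB.
    move: dj; rewrite -setI_eq0 => /eqP/setP dj.
    apply/setP => z; have := dj z; rewrite !inE; bcase.
  have c1 := bases_card hM hX hB.
  have dX : #|X| = (#|B' :&: S| + #|B :\: S|)%N.
    rewrite cardsU; suff -> : B' :&: S :&: (B :\: S) = set0 by rewrite cards0 subn0.
    by apply/setP => z; rewrite !inE; bcase.
  move: c1; rewrite dX (cardID B S) => /eqP; rewrite eqn_add2r => /eqP.
  by move=> ->.
rewrite /cover; apply: (big_ind sep); first exact: sep0.
  by move=> x y; apply: sepU.
by move=> S hS; apply: hsepP; apply: (subsetP hQ).
Qed.

End Union.

Section MinB.
Variable R : realType.
Variable T : finType.
Variable bases : {set {set T}}.
Hypothesis hM : is_matroid bases.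

Definition wsum (w : T -> R) (B : {set T}) := \sum_(e in B) w e.

Lemma wsum_swap (w : T -> R) (B : {set T}) (x y : T) : x \in B -> y \notin B ->
  wsum w (y |: (B :\ x)) = wsum w B - w x + w y.
Proof.
move=> xB yB; rewrite /wsum big_setU1 /=; last by rewrite !inE negb_and yB orbT.
by rewrite (big_setD1 x xB) /=; ring.
Qed.

Lemma min_basis (w : T -> R) : exists2 B, B \in bases &
  forall t : R, #|[set e | w e <= t] :&: B| = rank bases [set e | w e <= t].
Proof.
have [B0 hB0] := bases_ne hM.
have [Bs [hBs hmin]] := exists_minR (P := fun B => B \in bases) (wsum w) hB0.
exists Bs => // t; set S := [set e | w e <= t].
apply/eqP; rewrite eqn_leq rank_ge //=.
have [B1 hB1 ->] := rank_eq hM S.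
rewrite leqNgt; apply/negP => hlt.
pose Pq := fun B => (B \in bases) && (#|S :&: Bs| < #|S :&: B|)%N.
have hP1 : Pq B1 by rewrite /Pq hB1 hlt.
case: (arg_minnP (fun B => #|Bs :\: B|) hP1) => B' /andP[hB' hlt'] hmin'.
have sub : forall y, y \in B' -> y \notin Bs -> y \in S.
  move=> y yB' yBs; apply/negPn/negP => yS.
  have hy : y \in B' :\: Bs by rewrite inE yB' yBs.
  have [z hz hB''] := exch hM hB' hBs hy.
  move: hz; rewrite inE => /andP[zB' zBs].
  have hP'' : Pq (z |: (B' :\ y)).
    rewrite /Pq hB'' /=; apply: (leq_trans hlt'); apply: subset_leq_card.
    apply/subsetP => u; rewrite !inE => /andP[uS uB']; rewrite uS uB' andbT /=.
    apply/orP; right; apply/eqP => e; move: yS uS; rewrite e /S !inE => /negP h1 h2; exact: h1 h2.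
  have := hmin' _ hP''.
  have -> : Bs :\: (z |: (B' :\ y)) = (Bs :\: B') :\ z.
    apply/setP => u; rewrite !inE; case: (u =P z) => [->|_];
    last case: (u =P y) => [->|_]; rewrite ?zBs ?(negbTE zB') ?(negbTE yBs) ?yB' ?eqxx; bcase.
  rewrite (cardsD1 z (Bs :\: B')) !inE zBs (negbTE zB') /= add1n.
  by rewrite ltnn.
have [x hx xS] : exists2 x, x \in Bs :\: B' & x \notin S.
  apply/exists_inP; rewrite -negb_forall_in; apply/negP => /forall_inP hall.
  have hsub : Bs :\: S \subset B' :\: S.
    apply/subsetP => u; rewrite !inE => /andP[uS uBs]; rewrite uS /=.
    by apply/negPn/negP => uB'; have := hall u; rewrite !inE uBs uB' => /(_ isT); rewrite (negbTE uS).
  have := subset_leq_card hsub.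
  have c1 := cardID Bs S; have c2 := cardID B' S.
  rewrite (bases_card hM hBs hB') in c1.
  move: hlt'; rewrite ![S :&: _]setIC => hlt'.
  move=> hle; lia.
have [y hy hBn] := exch hM hBs hB' hx.
move: hx hy; rewrite !inE => /andP[xB' xBs] /andP[yBs yB'].
have yS : y \in S by apply: sub.
have := hmin _ hBn; rewrite wsum_swap // ?yBs //.
move: xS yS; rewrite !inE -ltNge => xS yS.
have : w y < w x by apply: (le_lt_trans yS xS).
move=> hyx hle.
have : wsum w Bs - w x + w y < wsum w Bs.
  lra.
by rewrite ltNge hle.
Qed.

End MinB.

Section Abel.
Variable R : realType.
Variable T : finType.

Lemma abel (h w : T -> R) : forall n (D : {set T}), (#|D| <= n)%N ->
  (forall f, f \in D -> 0 <= \sum_(e in D | w e <= w f) h e) ->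
  forall f0, f0 \in D -> (forall e, e \in D -> w e <= w f0) ->
  \sum_(e in D) h e * (w e - w f0) <= 0 /\
  (\sum_(e in D) h e * (w e - w f0) = 0 ->
     forall f, f \in D -> w f < w f0 -> \sum_(e in D | w e <= w f) h e = 0).
Proof.
elim=> [|n IH] D hD hH f0 hf0 hmax.
  by move: hD; rewrite leqn0 cards_eq0 => /eqP e; rewrite e inE in hf0.
set D' := [set e in D | w e < w f0].
have E1 : \sum_(e in D) h e * (w e - w f0) = \sum_(e in D') h e * (w e - w f0).
  rewrite big_mkcond [RHS]big_mkcond; apply: eq_bigr => e _; rewrite /D' inE.
  case eD: (e \in D) => //=; case: (ltP (w e) (w f0)) => // hge.
  have hle := hmax e eD; have -> : w e = w f0 by apply/eqP; rewrite eq_le hle hge.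
  by rewrite subrr mulr0.
rewrite E1.
case: (set_0Vmem D') => [e0|[f1' hf1']].
  rewrite e0 big_set0; split=> // _ f hf hlt.
  have : f \in D' by rewrite /D' inE hf hlt.
  by rewrite e0 inE.
have [f1 [hf1 hmax1]] := exists_maxR (P := fun e => e \in D') w hf1'.
have hf1D : f1 \in D by move: hf1; rewrite inE => /andP[].
have hf1lt : w f1 < w f0 by move: hf1; rewrite inE => /andP[].
have HH : forall f, f \in D' ->
    \sum_(e in D' | w e <= w f) h e = \sum_(e in D | w e <= w f) h e.
  move=> f; rewrite inE => /andP[fD flt]; apply: eq_bigl => e; rewrite inE.
  case eD: (e \in D) => //=; case: (leP (w e) (w f)) => hle; rewrite ?andbT ?andbF //.
  by rewrite (le_lt_trans hle flt).
have S1 : \sum_(e in D') h e = \sum_(e in D | w e <= w f1) h e.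
  apply: eq_bigl => e; rewrite inE.
  case eD: (e \in D) => //=; apply/idP/idP => [hlt|hle].
    by apply: hmax1; rewrite inE eD hlt.
  exact: le_lt_trans hle hf1lt.
have split : \sum_(e in D') h e * (w e - w f0) =
    \sum_(e in D') h e * (w e - w f1) + (w f1 - w f0) * \sum_(e in D') h e.
  rewrite mulr_sumr -big_split /=; apply: eq_bigr => e _; ring.
have hcard : (#|D'| <= n)%N.
  rewrite -ltnS; apply: leq_trans hD; apply: proper_card; apply/properP; split.
    by apply/subsetP => e; rewrite inE => /andP[].
  by exists f0 => //; rewrite inE hf0 ltxx.
have hH' : forall f, f \in D' -> 0 <= \sum_(e in D' | w e <= w f) h e.
  by move=> f hf; rewrite HH //; apply: hH; move: hf; rewrite inE => /andP[].
have [IH1 IH2] := IH D' hcard hH' f1 hf1 hmax1.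
have hS : 0 <= \sum_(e in D') h e by rewrite S1; apply: hH.
have hneg : (w f1 - w f0) * \sum_(e in D') h e <= 0.
  by rewrite mulr_le0_ge0 // subr_le0 ltW.
rewrite split; split; first lra.
move=> heq f hf hlt.
have [a0 b0] : \sum_(e in D') h e * (w e - w f1) = 0 /\ (w f1 - w f0) * \sum_(e in D') h e = 0.
  move: heq IH1 hneg; set a := \sum_(e in D') _; set b := _ * _; move=> *; split; lra.
have Sz : \sum_(e in D') h e = 0.
  by move/eqP: b0; rewrite mulf_eq0 subr_eq0 (lt_eqF hf1lt) /= => /eqP.
have fD' : f \in D' by rewrite /D' inE hf hlt.
rewrite -HH //.
case: (ltP (w f) (w f1)) => hff1.
  by apply: IH2.
rewrite -[RHS]Sz; apply: eq_bigl => e; case eD': (e \in D') => //=.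
by apply: (le_trans (hmax1 e eD')).
Qed.

End Abel.

Section Farkas.
Variable R : realType.
Variable T : finType.

Definition dot (a x : T -> R) := \sum_e a e * x e.

Lemma dot_linl (u v y : T -> R) k : dot (fun e => u e - k * v e) y = dot u y - k * dot v y.
Proof.
rewrite /dot mulr_sumr -sumrB; apply: eq_bigr => e _; ring.
Qed.

Lemma dot_linr (u y x : T -> R) k : dot u (fun e => y e - k * x e) = dot u y - k * dot u x.
Proof.
rewrite /dot mulr_sumr -sumrB; apply: eq_bigr => e _; ring.
Qed.

Lemma div_neg_ge0 (a b : R) : a < 0 -> b < 0 -> 0 <= a / b.
Proof.
move=> ha hb; rewrite -mulrNN -invrN; apply: divr_ge0; rewrite oppr_ge0 ltW //.
Qed.

Lemma farkas (I : eqType) (s : seq I) : uniq s -> forall (a : I -> T -> R) (b : T -> R),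
  (exists x : T -> R, (forall i, i \in s -> 0 <= dot (a i) x) /\ dot b x < 0) \/
  (exists c : I -> R, (forall i, i \in s -> 0 <= c i) /\
     forall e, b e = \sum_(i <- s) c i * a i e).
Proof.
elim: s => [|i0 s IH] hu a b.
  case: (classic (forall e, b e = 0)) => [hb|hb].
    right; exists (fun _ => 0); split=> // e; by rewrite big_nil hb.
  have [e he] : exists e, b e <> 0.
    by apply: NNPP => hn; apply: hb => e; apply: NNPP => he; apply: hn; exists e.
  left; exists (fun e' => if e' == e then - b e else 0); split=> //.
  rewrite /dot (bigD1 e) //= eqxx big1 => [|e' /negbTE ->]; last by rewrite mulr0.
  rewrite addr0; case: (ltrgtP (b e) 0) => hb0; [nra | nra | by move: he; rewrite hb0].
move: hu; rewrite cons_uniq => /andP[hi0 hu].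
have memc : forall i, i \in i0 :: s -> i = i0 \/ i \in s.
  by move=> i; rewrite in_cons => /orP[/eqP ->|]; [left|right].
case: (IH hu a b) => [[x [hx hbx]]|[c [hc hbc]]]; last first.
  right; exists (fun i => if i == i0 then 0 else c i); split.
    by move=> i /memc [->|hi]; rewrite ?eqxx // ; case: (i == i0) => //; apply: hc.
  move=> e; rewrite big_cons eqxx mul0r add0r hbc; apply: eq_big_seq => i hi.
  by case: (i =P i0) => // ei; move: hi0; rewrite -ei hi.
case: (leP 0 (dot (a i0) x)) => hax.
  left; exists x; split => // i /memc [->|]; [exact: hax| exact: hx].
set al := dot (a i0) x.
have alnz : al != 0 by rewrite lt_eqF.
pose a' := fun i e => a i e - (dot (a i) x / al) * a i0 e.
pose b' := fun e => b e - (dot b x / al) * a i0 e.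
case: (IH hu a' b') => [[y [hy hby]]|[c [hc hbc]]].
  left; exists (fun e => y e - (dot (a i0) y / al) * x e); split.
    move=> i /memc [->|hi].
      by rewrite dot_linr -/al divfK // subrr.
    have := hy i hi; rewrite /a' dot_linl dot_linr.
    suff -> : dot (a i) x / al * dot (a i0) y = dot (a i0) y / al * dot (a i) x by [].
    ring.
  move: hby; rewrite /b' dot_linl dot_linr -/al.
  suff -> : dot b x / al * dot (a i0) y = dot (a i0) y / al * dot b x by [].
  ring.
right; set S := \sum_(i <- s) c i * dot (a i) x.
have hS : 0 <= S by rewrite /S big_seq; apply: sumr_ge0 => i hi; apply: mulr_ge0; [apply: hc | apply: hx].
exists (fun i => if i == i0 then (dot b x - S) / al else c i); split.
  move=> i /memc [->|hi]; first by rewrite eqxx; apply: div_neg_ge0 => //; lra.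
  case: (i =P i0) => [ei|_]; [by move: hi0; rewrite -ei hi | exact: hc].
move=> e; rewrite big_cons eqxx.
have -> : \sum_(j <- s) (if j == i0 then (dot b x - S) / al else c j) * a j e =
          \sum_(j <- s) c j * a j e.
  apply: eq_big_seq => i hi.
  by case: (i =P i0) => // ei; move: hi0; rewrite -ei hi.
have := hbc e; rewrite /b' /a'.
have -> : \sum_(i <- s) c i * (a i e - dot (a i) x / al * a i0 e) =
          \sum_(i <- s) c i * a i e - S / al * a i0 e.
  rewrite /S mulr_suml mulr_suml -sumrB; apply: eq_bigr => i _; ring.
move=> h; have -> : b e = \sum_(i <- s) c i * a i e - S / al * a i0 e + dot b x / al * a i0 e.
  by rewrite -h; ring.
ring.
Qed.

End Farkas.

Section Main.
Variable R : realType.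
Variable T : finType.
Variable bases : {set {set T}}.
Hypothesis hM : is_matroid bases.
Hypothesis hL : loopless bases.
Hypothesis hT : (0 < #|T|)%N.

Local Notation r := (rank bases [set: T]).
Local Notation n := #|T|.
Local Notation rhoE := (density bases R [set: T]).

Lemma rank_pos A : A != set0 -> (0 < rank bases A)%N.
Proof.
case/set0Pn => e he; have [B hB eB] := hL e.
apply: (leq_trans _ (rank_ge A hB)); rewrite card_gt0; apply/set0Pn; exists e.
by rewrite inE he eB.
Qed.

Lemma r_pos : (0 < r)%N.
Proof.
apply: rank_pos; apply/set0Pn; move: hT => /card_gt0P [e _]; exists e; by rewrite inE.
Qed.

Lemma card_basis B : B \in bases -> #|B| = r.
Proof. by move=> hB; rewrite (rankT hM hB). Qed.

Lemma rhoE_val : rhoE = n%:R / r%:R.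
Proof. by rewrite /density cardsT. Qed.

Lemma frac_le (a b p q : nat) : (0 < b)%N -> (0 < q)%N ->
  ((a%:R / b%:R : R) <= p%:R / q%:R) = (a * q <= p * b)%N.
Proof.
move=> hb hq; rewrite ler_pdivrMr ?ltr0n // mulrAC ler_pdivlMr ?ltr0n //.
by rewrite -!natrM ler_nat.
Qed.

Lemma frac_lt (a b p q : nat) : (0 < b)%N -> (0 < q)%N ->
  ((a%:R / b%:R : R) < p%:R / q%:R) = (a * q < p * b)%N.
Proof.
move=> hb hq; rewrite ltr_pdivrMr ?ltr0n // mulrAC ltr_pdivlMr ?ltr0n //.
by rewrite -!natrM ltr_nat.
Qed.

Lemma dens_le A : A != set0 -> (density bases R A <= rhoE) = (#|A| * r <= n * rank bases A)%N.
Proof. by move=> hA; rewrite rhoE_val /density frac_le ?r_pos ?rank_pos. Qed.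

Lemma dens_lt A : A != set0 -> (density bases R A < rhoE) = (#|A| * r < n * rank bases A)%N.
Proof. by move=> hA; rewrite rhoE_val /density frac_lt ?r_pos ?rank_pos. Qed.

Lemma dbl (mu : {set T} -> R) (A : {set T}) :
  \sum_(e in A) \sum_(B in bases | e \in B) mu B = \sum_(B in bases) mu B * #|A :&: B|%:R.
Proof.
under eq_bigr do rewrite big_mkcondr /=.
rewrite exchange_big /=; apply: eq_bigr => B hB.
rewrite -big_mkcondr /= (eq_bigl (fun e => e \in A :&: B)); last by move=> e; rewrite inE.
by rewrite sumr_const mulr_natr.
Qed.

End Main.

Section Main2.
Variable R : realType.
Variable T : finType.
Variable bases : {set {set T}}.
Hypothesis hM : is_matroid bases.
Hypothesis hL : loopless bases.
Hypothesis hT : (0 < #|T|)%N.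

Local Notation r := (rank bases [set: T]).
Local Notation n := #|T|.
Local Notation rhoE := (density bases R [set: T]).

Lemma Zpos (mu : {set T} -> R) : (forall B, B \in bases -> 0 < mu B) ->
  0 < \sum_(B in bases) mu B.
Proof.
move=> hpos; have [B0 hB0] := bases_ne hM.
rewrite (bigD1 B0) //=; apply: ltr_pwDl; first exact: hpos.
by apply: sumr_ge0 => B /andP[hB _]; apply/ltW/hpos.
Qed.

Lemma p3p2 : uniform_positive_measure bases R ->
  forall A, A != set0 -> density bases R A <= rhoE /\
     (~ union_of_components bases A -> density bases R A < rhoE).
Proof.
case=> mu [hpos hunif].
have [e0 _] := card_gt0P hT.
set c := \sum_(B in bases | e0 \in B) mu B.
have hc : forall e, \sum_(B in bases | e \in B) mu B = c := fun e => hunif e e0.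
set Z := \sum_(B in bases) mu B.
have hZ : 0 < Z := Zpos hpos.
have hA : forall A : {set T}, #|A|%:R * c = \sum_(B in bases) mu B * #|A :&: B|%:R.
  move=> A; rewrite -dbl; under eq_bigr do rewrite hc.
  by rewrite sumr_const mulr_natl.
have hTc : n%:R * c = r%:R * Z.
  rewrite -cardsT hA /Z mulr_sumr; apply: eq_bigr => B hB.
  by rewrite setTI (card_basis hM hB) mulrC.
move=> A hA0; set ra := rank bases A.
have hle : #|A|%:R * c <= ra%:R * Z.
  rewrite hA /Z mulr_sumr; apply: ler_sum => B hB; rewrite mulrC.
  apply: ler_wpM2r; first exact/ltW/hpos.
  by rewrite ler_nat; apply: rank_ge.
have hn : 0 < n%:R :> R by rewrite ltr0n.
have key : (#|A| * r)%:R * Z = n%:R * (#|A|%:R * c) :> R.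
  by rewrite natrM -mulrA -hTc; ring.
have le1 : (#|A| * r <= n * ra)%N.
  rewrite -(ler_nat R) -(ler_pM2r hZ) key natrM -mulrA.
  by apply: ler_wpM2l; [exact: ltW | exact: hle].
split; first by rewrite (dens_le R hL hT) //.
move=> hnu; rewrite (dens_lt R hL hT) //; rewrite ltn_neqAle le1 andbT.
apply/negP => /eqP heq; apply: hnu; apply: (sep_union hM).
have hac : #|A|%:R * c = ra%:R * Z.
  apply: (mulfI (lt0r_neq0 hn)); rewrite -key heq natrM mulrA.
  by rewrite /Z; ring.
have h0 : \sum_(B in bases) mu B * (ra%:R - #|A :&: B|%:R) = 0.
  under eq_bigr do rewrite mulrBr.
  by rewrite sumrB -hA -mulr_suml -/Z hac mulrC subrr.
have hall : forall B, B \in bases -> #|A :&: B| = ra.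
  have hnn : forall B, B \in bases -> 0 <= mu B * (ra%:R - #|A :&: B|%:R).
    move=> B hB; apply: mulr_ge0; first exact/ltW/hpos.
    by rewrite subr_ge0 ler_nat; apply: rank_ge.
  move=> B hB; have /eqP := psumr_eq0P hnn h0 hB.
  rewrite mulf_eq0 (gt_eqF (hpos B hB)) /= subr_eq0 eqr_nat => /eqP.
  by move=> ->.
move=> B1 B2 h1 h2; by rewrite setIC hall // setIC hall.
Qed.

End Main2.

Section Main3.
Variable R : realType.
Variable T : finType.
Variable bases : {set {set T}}.
Hypothesis hM : is_matroid bases.
Hypothesis hL : loopless bases.
Hypothesis hT : (0 < #|T|)%N.

Local Notation r := (rank bases [set: T]).
Local Notation n := #|T|.
Local Notation rhoE := (density bases R [set: T]).

Definition vv (B : {set T}) : T -> R := fun e => n%:R * (e \in B)%:R - r%:R.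

Lemma sum_ind (S B : {set T}) : \sum_(e in S) ((e \in B)%:R : R) = #|S :&: B|%:R.
Proof.
rewrite (eq_bigr (fun e => if e \in B then 1 else 0)); last by move=> e _; case: (e \in B).
rewrite -big_mkcondr /= (eq_bigl (fun e => e \in S :&: B)); last by move=> e; rewrite inE.
by rewrite sumr_const.
Qed.

Lemma sum_vv (S B : {set T}) : \sum_(e in S) vv B e = n%:R * #|S :&: B|%:R - r%:R * #|S|%:R.
Proof.
by rewrite /vv sumrB -mulr_sumr sum_ind sumr_const [r%:R * _]mulr_natr.
Qed.

Lemma sum_vv_T B : B \in bases -> \sum_e vv B e = 0.
Proof.
move=> hB; have := sum_vv [set: T] B; rewrite setTI (card_basis hM hB) cardsT.
have -> : \sum_(e in [set: T]) vv B e = \sum_e vv B e by apply: eq_bigl => e; rewrite inE.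
by move=> ->; rewrite mulrC subrr.
Qed.

Lemma Hsum (w : T -> R) B f :
  \sum_(e in [set: T] | w e <= w f) vv B e =
  n%:R * #|[set e | w e <= w f] :&: B|%:R - r%:R * #|[set e | w e <= w f]|%:R.
Proof.
rewrite -sum_vv; apply: eq_bigl => e; by rewrite !inE.
Qed.

Lemma abelT (h w : T -> R) :
  \sum_e h e = 0 ->
  (forall f, 0 <= \sum_(e in [set: T] | w e <= w f) h e) ->
  0 <= \sum_e h e * w e ->
  \sum_e h e * w e = 0 /\ forall f, \sum_(e in [set: T] | w e <= w f) h e = 0.
Proof.
move=> h0 hH hpos.
have [e0 _] := card_gt0P hT.
have [f0 [_ hf0]] := exists_maxR (P := fun _ => true) w (i0 := e0) isT.
have hT' : (#|[set: T]| <= #|T|)%N by rewrite cardsT.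
have f0T : f0 \in [set: T] by rewrite inE.
have [a1 a2] := abel hT' (fun f _ => hH f) f0T (fun e _ => hf0 e isT).
have eS : \sum_(e in [set: T]) h e * (w e - w f0) = \sum_e h e * w e.
  rewrite (eq_bigl (fun _ => true)); last by move=> e; rewrite inE.
  under eq_bigr do rewrite mulrBr.
  by rewrite sumrB -mulr_suml h0 mul0r subr0.
rewrite eS in a1 a2.
have z : \sum_e h e * w e = 0 by apply/eqP; rewrite eq_le a1 hpos.
split=> // f; have fT : f \in [set: T] by rewrite inE.
case: (ltP (w f) (w f0)) => hf; first exact: (a2 z f fT hf).
rewrite -[RHS]h0; apply: eq_bigl => e; rewrite inE /=.
by apply: le_trans (hf0 e isT) hf.
Qed.


End Main3.

Section Main4.
Variable R : realType.
Variable T : finType.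
Variable bases : {set {set T}}.
Hypothesis hM : is_matroid bases.
Hypothesis hL : loopless bases.
Hypothesis hT : (0 < #|T|)%N.

Local Notation r := (rank bases [set: T]).
Local Notation n := #|T|.
Local Notation rhoE := (density bases R [set: T]).
Local Notation vv := (vv R bases).

Definition P2 := forall A : {set T}, A != set0 ->
  density bases R A <= rhoE /\ (~ union_of_components bases A -> density bases R A < rhoE).

Lemma no_sep_w (H2 : P2) (w : T -> R) B0 : B0 \in bases ->
  (forall B, B \in bases -> 0 <= dot (vv B) w) -> dot (vv B0) w <= 0.
Proof.
move=> hB0 hall.
have [Bs hBs hmin] := min_basis hM w.
set S := fun f => [set e | w e <= w f].
have Sne : forall f, S f != set0 by move=> f; apply/set0Pn; exists f; rewrite inE.
have h0 := sum_vv_T R hM hBs.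
have hH : forall f, 0 <= \sum_(e in [set: T] | w e <= w f) vv Bs e.
  move=> f; rewrite Hsum hmin subr_ge0 -!natrM ler_nat.
  have [h1 _] := H2 _ (Sne f); move: h1; rewrite (dens_le R hL hT (Sne f)).
  by rewrite /S [(r * _)%N]mulnC.
have [_ hz] := abelT hT h0 hH (hall Bs hBs).
have hsep : forall f, sep bases (S f).
  move=> f; apply: (union_sep hM); apply: NNPP => hnu.
  have [_ h2] := H2 _ (Sne f); move: (h2 hnu); rewrite (dens_lt R hL hT (Sne f)).
  have := hz f; rewrite Hsum hmin => /eqP; rewrite subr_eq0 -!natrM eqr_nat => /eqP.
  by rewrite /S => e1; rewrite [(_ * r)%N]mulnC -e1 ltnn.
have h00 := sum_vv_T R hM hB0.
have hH0 : forall f, 0 <= \sum_(e in [set: T] | w e <= w f) vv B0 e.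
  move=> f; rewrite Hsum (sep_rank hM (hsep f) hB0) -hmin.
  have := hz f; rewrite Hsum => ->; exact: lexx.
have [z _] := abelT hT h00 hH0 (hall B0 hB0).
by rewrite /dot z.
Qed.

Lemma dotN (a x : T -> R) : dot (fun e => - a e) x = - dot a x.
Proof. by rewrite /dot -sumrN; apply: eq_bigr => e _; rewrite mulNr. Qed.

Lemma p2p3 : P2 -> uniform_positive_measure bases R.
Proof.
move=> H2.
have step : forall B0, B0 \in bases -> exists lam : {set T} -> R,
    [/\ forall B, B \in bases -> 0 <= lam B, 0 < lam B0 &
        forall e, \sum_(B in bases) lam B * vv B e = 0].
  move=> B0 hB0.
  case: (farkas (enum_uniq (mem bases)) vv (fun e => - vv B0 e)) => [[x [hx hbx]]|[c [hc hbc]]].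
    have hx' : forall B, B \in bases -> 0 <= dot (vv B) x by move=> B hB; apply: hx; rewrite mem_enum.
    have := no_sep_w H2 hB0 hx'; move: hbx; rewrite dotN oppr_lt0 => h1 h2.
    by have := lt_le_trans h1 h2; rewrite ltxx.
  exists (fun B => c B + (B == B0)%:R); split.
  - move=> B hB; apply: addr_ge0; [apply: hc; rewrite mem_enum; exact: hB | exact: ler0n].
  - by rewrite /= eqxx; apply: ltr_wpDl; [apply: hc; rewrite mem_enum; exact: hB0 | exact: ltr01].
  - move=> e; under eq_bigr do rewrite mulrDl.
    rewrite big_split /= -big_enum /= -hbc.
    rewrite (bigD1 B0) //= eqxx mul1r big1 ?addr0 ?addNr // => B /andP[_ /negbTE ->].
    by rewrite mul0r.
have comb : forall s : seq {set T}, {subset s <= bases} -> exists mu : {set T} -> R,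
    [/\ forall B, B \in bases -> 0 <= mu B, forall B, B \in s -> 0 < mu B &
        forall e, \sum_(B in bases) mu B * vv B e = 0].
  elim=> [|B0 s IH] hs.
    exists (fun _ => 0); split=> // e; by rewrite big1 // => B _; rewrite mul0r.
  have hs' : {subset s <= bases} by move=> x hx; apply: hs; rewrite inE hx orbT.
  have [mu [m1 m2 m3]] := IH hs'.
  have hB0 : B0 \in bases by apply: hs; rewrite inE eqxx.
  have [lam [l1 l2 l3]] := step B0 hB0.
  exists (fun B => mu B + lam B); split.
  - by move=> B hB; apply: addr_ge0; [apply: m1 | apply: l1].
  - move=> B; rewrite inE => /orP[/eqP ->|hB].
      by apply: ltr_wpDl; [apply: m1 | ].
    by apply: ltr_wpDr; [apply: l1; apply: hs'| apply: m2].
  - move=> e; under eq_bigr do rewrite mulrDl.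
    by rewrite big_split /= m3 l3 addr0.
have hsub : {subset enum bases <= bases} by move=> x; rewrite mem_enum.
have [mu [m1 m2 m3]] := comb _ hsub.
exists mu; split; first by move=> B hB; apply: m2; rewrite mem_enum.
have hu : forall e, n%:R * \sum_(B in bases | e \in B) mu B = r%:R * \sum_(B in bases) mu B.
  move=> e; have := m3 e; rewrite /vv.
  under eq_bigr do rewrite mulrBr.
  rewrite sumrB => /eqP; rewrite subr_eq0 => /eqP h.
  rewrite big_mkcondr mulr_sumr /= mulr_sumr.
  have -> : \sum_(B in bases) n%:R * (if e \in B then mu B else 0) =
            \sum_(B in bases) mu B * (n%:R * (e \in B)%:R).
    by apply: eq_bigr => B _; case: (e \in B) => /=; ring.
  rewrite h; apply: eq_bigr => B _; ring.
have hn0 : (n%:R : R) != 0 by rewrite pnatr_eq0 -lt0n.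
move=> e f; apply: (mulfI hn0).
by rewrite hu hu.
Qed.
End Main4.

Section Poly1.
Variable R : realType.
Variable T : finType.
Variable bases : {set {set T}}.
Hypothesis hM : is_matroid bases.

Local Notation ind := (@indicator T R).

Lemma condsum (F : {set T} -> R) e :
  \sum_(B in bases | e \in B) F B = \sum_(B in bases) F B * ind B e.
Proof.
rewrite big_mkcondr; apply: eq_bigr => B _; rewrite /indicator.
by case: (e \in B) => /=; [rewrite mulr1 | rewrite mulr0].
Qed.

Lemma ind01 B e : 0 <= ind B e <= 1.
Proof. rewrite /indicator; case: (e \in B) => /=; [by rewrite ler01 lexx | by rewrite lexx ler01]. Qed.

Lemma conv01 (p : {set T} -> R) e : (forall B, B \in bases -> 0 <= p B) ->
  \sum_(B in bases) p B = 1 -> 0 <= \sum_(B in bases) p B * ind B e <= 1.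
Proof.
move=> hp h1; apply/andP; split.
  by apply: sumr_ge0 => B hB; apply: mulr_ge0; [apply: hp | case/andP: (ind01 B e)].
rewrite -h1; apply: ler_sum => B hB; have := hp B hB; have /andP[a b] := ind01 B e.
move=> c; nra.
Qed.

Lemma p1p3 (x0 : R) : in_rel_interior bases (fun _ : T => x0) -> uniform_positive_measure bases R.
Proof.
case=> [[lam [l1 l2 l3]] [eps heps hball]].
have [B0 hB0] := bases_ne hM.
set N : R := #|bases|%:R.
have hN : 0 < N by rewrite ltr0n; apply/card_gt0P; exists B0.
set t := eps / 2.
have ht : 0 < t by rewrite divr_gt0.
set b := fun e => \sum_(B in bases) N^-1 * ind B e.
have hbsum : \sum_(B in bases) N^-1 = 1.
  by rewrite sumr_const -mulr_natr mulVf // lt0r_neq0.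
have hb01 : forall e, 0 <= b e <= 1.
  by move=> e; apply: conv01 => // B _; rewrite invr_ge0 ltW.
pose y := fun e => (1 + t) * x0 - t * b e.
have haff : in_affine_hull bases y.
  exists (fun B => (1 + t) * lam B - t * N^-1); split.
    by rewrite sumrB -!mulr_sumr l2 hbsum !mulr1 addrK.
  move=> e; rewrite /y /b (l3 e) mulr_sumr mulr_sumr -sumrB; apply: eq_bigr => B _; ring.
have hdist : forall e, `|y e - x0| < eps.
  move=> e; have -> : y e - x0 = t * (x0 - b e) by rewrite /y; ring.
  rewrite normrM (gtr0_norm ht).
  have : `|x0 - b e| <= 1.
    have := conv01 e l1 l2; rewrite -(l3 e) => hx.
    rewrite ler_norml; have /andP[a1 a2] := hx; have /andP[b1 b2] := hb01 e.
    apply/andP; split; lra.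
  have : 0 <= `|x0 - b e| by [].
  rewrite /t; move=> *; nra.
have [kap [k1 k2 k3]] := hball y haff hdist.
exists (fun B => (kap B + t * N^-1) / (1 + t)); split.
  move=> B hB; apply: divr_gt0; last lra.
  by apply: ltr_wpDl; [apply: k1 | apply: mulr_gt0; rewrite ?invr_gt0].
suff H : forall e, \sum_(B in bases | e \in B) (kap B + t * N^-1) / (1 + t) = x0.
  by move=> e f; rewrite !H.
move=> e; rewrite condsum.
have -> : \sum_(B in bases) (kap B + t * N^-1) / (1 + t) * ind B e =
   (\sum_(B in bases) kap B * ind B e + t * b e) / (1 + t).
  rewrite /b mulr_sumr -big_split mulr_suml; apply: eq_bigr => B _ /=; ring.
rewrite -k3 /y.
have : 1 + t != 0 by rewrite lt0r_neq0 //; lra.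
move=> hnz; by rewrite subrK [(1 + t) * x0]mulrC mulfK.
Qed.

End Poly1.

Lemma sum_enum (R : realType) (I : finType) (F : I -> R) :
  \sum_(i < #|I|) F (enum_val i) = \sum_x F x.
Proof.
rewrite (reindex (@enum_rank I)) /=; first by apply: eq_bigr => x _; rewrite enum_rankK.
by exists enum_val => x _; [apply: enum_rankK | apply: enum_valK].
Qed.

Lemma term_le_sum (R : realType) (I : finType) (f : I -> R) i0 :
  (forall i, 0 <= f i) -> f i0 <= \sum_i f i.
Proof.
by move=> h; rewrite (bigD1 i0) //= lerDl; apply: sumr_ge0 => i _; apply: h.
Qed.

Section Poly2.
Variable R : realType.
Variable T : finType.
Variable bases : {set {set T}}.
Hypothesis hM : is_matroid bases.
Hypothesis hL : loopless bases.
Hypothesis hT : (0 < #|T|)%N.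

Local Notation r := (rank bases [set: T]).
Local Notation n := #|T|.
Local Notation rhoE := (density bases R [set: T]).
Local Notation ind := (@indicator T R).

Lemma relint_of_pos (x0 : R) (lam : {set T} -> R) :
  (forall B, B \in bases -> 0 < lam B) -> \sum_(B in bases) lam B = 1 ->
  (forall e, x0 = \sum_(B in bases) lam B * ind B e) ->
  in_rel_interior bases (fun _ : T => x0).
Proof.
move=> lpos lsum lx; split.
  by exists lam; split => // B hB; apply/ltW/lpos.
pose K := #|{set T}|; pose m := #|T|.
pose A1 : 'M[R]_(K, m) := \matrix_(i, j) (if enum_val i \in bases then ind (enum_val i) (enum_val j) else 0).
pose A2 : 'M[R]_(K, 1) := \matrix_(i, j) (if enum_val i \in bases then 1 else 0).
pose A := row_mx A1 A2.
pose P := pinvmx A.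
pose C := \sum_(j < m + 1) \sum_(i < K) `|P j i|.
have hC : 0 <= C by apply: sumr_ge0 => j _; apply: sumr_ge0 => i _.
have [B0 hB0] := bases_ne hM.
have [B1 [hB1 hmin]] := exists_minR (P := fun B => B \in bases) lam hB0.
set lmin := lam B1.
have hlmin : 0 < lmin by apply: lpos.
exists (lmin / (C + 1)); first by apply: divr_gt0 => //; lra.
set eps := lmin / (C + 1).
have heps : 0 < eps by apply: divr_gt0 => //; lra.
have hepsC : eps * C <= lmin.
  rewrite /eps mulrAC ler_pdivrMr; last lra.
  by apply: ler_wpM2l; [exact: ltW | lra].
move=> y [kap [ksum ky]] hdist.
pose u : 'rV[R]_(m + 1) := row_mx (\row_j (y (enum_val j) - x0)) (0 : 'rV[R]_1).
pose d : 'rV[R]_K := \row_i (if enum_val i \in bases then kap (enum_val i) - lam (enum_val i) else 0).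
have hdA : d *m A = u.
  rewrite /A /u mul_mx_row; congr row_mx.
    apply/rowP => j; rewrite !mxE.
    pose G := fun X => if X \in bases then (kap X - lam X) * ind X (enum_val j) else 0.
    have -> : \sum_i d 0 i * A1 i j = \sum_X G X.
      rewrite -(sum_enum G); apply: eq_bigr => i _; rewrite /G !mxE.
      by case: (enum_val i \in bases) => //; rewrite mul0r.
    rewrite /G -big_mkcond /= (ky (enum_val j)) (lx (enum_val j)) -sumrB.
    by apply: eq_bigr => X _; rewrite mulrBl.
  apply/rowP => j; rewrite !mxE.
  pose G := fun X => if X \in bases then (kap X - lam X) else 0.
  have -> : \sum_i d 0 i * A2 i j = \sum_X G X.
    rewrite -(sum_enum G); apply: eq_bigr => i _; rewrite /G !mxE.
    by case: (enum_val i \in bases) => //; rewrite ?mulr1 ?mul0r.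
  by rewrite /G -big_mkcond /= sumrB ksum lsum subrr.
pose delta := u *m P.
have hdel : delta *m A = u by rewrite /delta mulmxKpV // -hdA submxMl.
have [hd1 hd2] : delta *m A1 = \row_j (y (enum_val j) - x0) /\ delta *m A2 = 0.
  by apply: eq_row_mx; rewrite -mul_mx_row.
have hu : forall j, `|u 0 j| <= eps.
  move=> j; rewrite /u mxE; case: split => k; rewrite !mxE.
    exact/ltW/hdist.
  by rewrite normr0 ltW.
have hbound : forall i, `|delta 0 i| <= lmin.
  move=> i; rewrite /delta mxE; apply: le_trans (ler_norm_sum _ _ _) _.
  apply: le_trans hepsC; rewrite mulr_sumr; apply: ler_sum => j _.
  rewrite normrM; apply: ler_pM; [exact: normr_ge0 | exact: normr_ge0 | exact: hu | ].
  by rewrite (bigD1 i) //= lerDl; apply: sumr_ge0 => *; exact: normr_ge0.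

exists (fun X => lam X + delta 0 (enum_rank X)); split.
- move=> X hX; have := hbound (enum_rank X); have := hmin X hX.
  rewrite -/lmin => h1; rewrite ler_norml => /andP[h2 _]; lra.
- rewrite big_split /= lsum.
  move/matrixP: hd2 => /(_ 0 0); rewrite !mxE.
  pose G := fun X => if X \in bases then delta 0 (enum_rank X) else 0.
  have -> : \sum_i delta 0 i * A2 i 0 = \sum_X G X.
    rewrite -(sum_enum G); apply: eq_bigr => i _; rewrite /G !mxE enum_valK.
    by case: (enum_val i \in bases); rewrite ?mulr1 ?mulr0.
  by rewrite /G -big_mkcond /= => ->; rewrite addr0.
- move=> e; move/rowP: hd1 => /(_ (enum_rank e)); rewrite !mxE enum_rankK.
  pose G := fun X => if X \in bases then delta 0 (enum_rank X) * ind X e else 0.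
  have -> : \sum_i delta 0 i * A1 i (enum_rank e) = \sum_X G X.
    rewrite -(sum_enum G); apply: eq_bigr => i _; rewrite /G !mxE enum_valK enum_rankK.
    by case: (enum_val i \in bases); rewrite ?mulr0.
  rewrite /G -big_mkcond /= => h.
  rewrite -[y e](subrK x0) -h (lx e) -big_split /=; apply: eq_bigr => X _; ring.
Qed.

End Poly2.

Section Final.
Variable R : realType.
Variable T : finType.
Variable bases : {set {set T}}.
Hypothesis hM : is_matroid bases.
Hypothesis hL : loopless bases.
Hypothesis hT : (0 < #|T|)%N.

Local Notation r := (rank bases [set: T]).
Local Notation n := #|T|.
Local Notation rhoE := (density bases R [set: T]).
Local Notation ind := (@indicator T R).

Lemma mu_tot (mu : {set T} -> R) :
  (forall e f : T, \sum_(B in bases | e \in B) mu B = \sum_(B in bases | f \in B) mu B) ->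
  forall e, n%:R * \sum_(B in bases | e \in B) mu B = r%:R * \sum_(B in bases) mu B.
Proof.
move=> hunif e; have := dbl bases mu [set: T].
under eq_bigr do rewrite (hunif _ e).
rewrite sumr_const cardsT => h; rewrite mulr_natl h.
rewrite mulr_sumr; apply: eq_bigr => B hB.
by rewrite setTI (card_basis hM hB) mulrC.
Qed.

Lemma p3p1 : uniform_positive_measure bases R -> in_rel_interior bases (fun _ : T => rhoE^-1).
Proof.
case=> mu [hpos hunif].
set Z := \sum_(B in bases) mu B.
have hZ : 0 < Z := Zpos hM hpos.
apply: (relint_of_pos hM (lam := fun B => mu B / Z)).
- by move=> B hB; apply: divr_gt0 => //; apply: hpos.
- by rewrite /= -mulr_suml mulfV // lt0r_neq0.
- move=> e /=; rewrite (eq_bigr (fun B => mu B * ind B e / Z)); last by move=> B _; rewrite mulrAC.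
  rewrite -mulr_suml.
  have -> : \sum_(B in bases) mu B * ind B e = \sum_(B in bases | e \in B) mu B.
    by rewrite (condsum bases).
  have hr : (r%:R : R) != 0 by rewrite pnatr_eq0 -lt0n (r_pos hL hT).
  have hn : (n%:R : R) != 0 by rewrite pnatr_eq0 -lt0n.
  rewrite rhoE_val invf_div; apply/eqP; rewrite eqr_div // ?lt0r_neq0 //.
  by rewrite [_ * #|T|%:R]mulrC (mu_tot hunif e).
Qed.

End Final.

Unset Implicit Arguments.

Theorem theorem2p10 (R : realType) (T : finType) (bases : {set {set T}}) :
  is_matroid bases -> loopless bases -> (0 < #|T|)%N ->
  let rhoE : R := density bases R [set: T] in
  [/\ in_rel_interior bases (fun _ : T => rhoE^-1) <->
        (forall A : {set T}, A != set0 ->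
           density bases R A <= rhoE /\
           (~ union_of_components bases A -> density bases R A < rhoE)),
      in_rel_interior bases (fun _ : T => rhoE^-1) <-> uniform_positive_measure bases R
    & (forall A : {set T}, A != set0 ->
           density bases R A <= rhoE /\
           (~ union_of_components bases A -> density bases R A < rhoE))
      <-> uniform_positive_measure bases R].
Proof.
move=> hM hL hT; cbv zeta.
have h13 := p1p3 hM (x0 := (density bases R [set: T])^-1).
have h31 := @p3p1 R _ _ hM hL hT.
have h23 := @p2p3 R _ _ hM hL hT.
have h32 := @p3p2 R _ _ hM hL hT.
rewrite /P2 in h23.
split; split => H.
- move=> A hA; exact: h32 (h13 H) A hA.
- exact: h31 (h23 H).
- exact: h13 H.
- exact: h31 H.
- exact: h23 H.
- move=> A hA; exact: h32 H A hA.
Qed.
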